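(* Let $k\ge 1$. There is no deterministic exploration algorithm that, knowing $k$, having unlimited memory, but having no information on the number of sites $n$ nor on (any upper bound on) the system period $p$, solves PVG-Exploration of every feasible homogeneous PV graph with distinct site identifiers and $k$ carriers (over all numbers of sites $n\ge k$ and all periods).
   Context: A PV (periodically varying) system consists of a finite set $S$ of $n$ sites and a set $C$ of $k\le n$ carriers. Each carrier $c$ has a distinct identifier and a route $\pi(c)=\langle x_0,\dots,x_{p(c)-1}\rangle$, a finite sequence of sites (repetitions allowed) of length $p(c)\ge 1$ called its period; for any integer $j$, $\pi(c)[j]$ denotes $x_{j \bmod p(c)}$. At each time $t\in\mathbb{N}$ carrier $c$ is at site $\pi(c)[t]$ and moves to $\pi(c)[t+1]$. The PV graph $\vec G_R$ is the directed edge-labelled multigraph on $S$ with edges $(x_i,x_{i+1},i)$, $0\le i<p(c)$ (indices mod $p(c)$), for every carrier $c$. Let $p=\max_{c}p(c)$. The system is homogeneous if all carriers have the same period. In a system with ids, sites have distinct identifiers visible to the agent. An exploring agent is injected at time $0$ at a site of $\mathrm{start}(\vec G_R)=\{\pi(c)[0]:c\in C\}$. If at time $t$ the agent is at site $x$, it must either choose a carrier $c$ with $\pi(c)[t]=x$ and ride with it to $\pi(c)[t+1]$ (one move), or halt and exit; it cannot wait at a site. At each time the agent observes the identifiers of the carriers present at its current site and the identifier of the site. An exploration algorithm is a deterministic rule mapping the agent's a priori knowledge and history of observations to its next action; its execution from injection site $x$ determines a walk $\xi(x)$. A walk is a concrete cover if it visits every site. An algorithm solves PVG-Exploration of $\vec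 G_R$ if for every $x\in\mathrm{start}(\vec G_R)$, $\xi(x)$ is finite and a concrete cover. $\vec G_R$ is feasible if from the starting point of every carrier there exists a walk realizable by the agent (riding carriers and switching between carriers at the same site at the same time) that is a concrete cover. *)

(* Defs.v *)
From mathcomp Require Import all_boot.
Set Implicit Arguments. Unset Strict Implicit. Unset Printing Implicit Defensive.

(* Sites and carriers are identified by
   natural-number identifiers.  [sites] lists the site set S (ids distinct),
   [cid i] is the identifier of carrier i, [route i] its route pi(c). *)
Record PV (k : nat) := MkPV {
  sites : seq nat;
  cid   : 'I_k -> nat;
  route : 'I_k -> seq nat
}.

Definition wf_PV k (R : PV k) : Prop :=
  [/\ uniq (sites R), k <= size (sites R),
      (forall i j, cid R i = cid R j -> i = j),
      (forall i, 0 < size (route R i)) &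
      (forall i, {subset route R i <= sites R})].

Definition homogeneous k (R : PV k) : Prop :=
  forall i j, size (route R i) = size (route R j).

Definition pos k (R : PV k) (i : 'I_k) (t : nat) : nat :=
  nth 0 (route R i) (t %% size (route R i)).

Definition is_start k (R : PV k) (x : nat) : Prop := exists i, pos R i 0 = x.

Definition realizable k (R : PV k) (w : seq nat) : Prop :=
  forall j, j.+1 < size w ->
    exists i, pos R i j = nth 0 w j /\ pos R i j.+1 = nth 0 w j.+1.

Definition concrete_cover k (R : PV k) (w : seq nat) : Prop :=
  {subset sites R <= w}.

Definition feasible k (R : PV k) : Prop :=
  forall i, exists w, realizable R (pos R i 0 :: w) /\
                      concrete_cover R (pos R i 0 :: w).

(* Observation at a time: (site id, sorted list of ids of carriers present). *)
Definition observation := (nat * seq nat)%type.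

Definition observe k (R : PV k) (t x : nat) : observation :=
  (x, sort leq [seq cid R i | i <- enum 'I_k & pos R i t == x]).

(* A deterministic exploration algorithm (unlimited memory): maps the full
   history of observations (the last one being the current) to an action:
   None = halt, Some c = ride the carrier with identifier c. It knows k
   only through the ambient quantification (it may depend on k). *)
Definition algorithm := seq observation -> option nat.

(* Execution with fuel.  Returns Some walk iff the agent halts within
   [fuel] steps, having only chosen carriers present at its site.
   Choosing an absent carrier is an invalid move (None). *)
Fixpoint run k (A : algorithm) (R : PV k) (fuel t x : nat)
    (hist : seq observation) : option (seq nat) :=
  match fuel with
  | 0 => None
  | f.+1 =>
    let h := rcons hist (observe R t x) in
    match A h with
    | None => Some [:: x]
    | Some c =>
      match [pick i | (cid R i == c) && (pos R i t == x)] with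
      | None => None
      | Some i => omap (cons x) (run A R f t.+1 (pos R i t.+1) h)
      end
    end
  end.

Definition solves k (A : algorithm) (R : PV k) : Prop :=
  forall x, is_start R x ->
    exists fuel w, run A R fuel 0 x [::] = Some w /\ concrete_cover R w.

(* Main.v *)
Require Import Defs.
From mathcomp Require Import all_boot.
Set Implicit Arguments. Unset Strict Implicit. Unset Printing Implicit Defensive.

Section Run.
Variable k : nat.
Variable A : algorithm.

Lemma run_agree (R0 R1 : PV k) fuel t x hist :
  (forall i, cid R0 i = cid R1 i) ->
  (forall i s, s <= t + fuel -> pos R0 i s = pos R1 i s) ->
  run A R0 fuel t x hist = run A R1 fuel t x hist.
Proof.
move=> Hc; elim: fuel t x hist => [//|f IH] t x hist Hp /=.
have Eo : observe R0 t x = observe R1 t x.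
  rewrite /observe; congr (_, sort _ _).
  rewrite (eq_filter (a2 := fun i => pos R1 i t == x)); last first.
    by move=> i /=; rewrite Hp // leq_addr.
  by apply: eq_map.
rewrite Eo; case: (A _) => [c|//].
have -> : [pick i | (cid R0 i == c) && (pos R0 i t == x)] =
          [pick i | (cid R1 i == c) && (pos R1 i t == x)].
  by apply: eq_pick => i /=; rewrite Hc Hp // leq_addr.
case: [pick i | _] => [i|//].
rewrite Hp; last by rewrite addnS ltnS leq_addr.
rewrite IH // => j s Hs; apply: Hp; by rewrite addnS -addSn.
Qed.

Lemma run_elems (R : PV k) fuel t x hist w :
  run A R fuel t x hist = Some w ->
  forall y, y \in w -> y = x \/ exists i s, y = pos R i s.
Proof.
elim: fuel t x hist w => [//|f IH] t x hist w /=.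
case: (A _) => [c|]; last by case=> <- y; rewrite inE => /eqP; left.
case: [pick i | _] => [i|//].
case E: (run _ _ _ _ _ _) => [w'|//] /= [<-] y; rewrite inE => /orP [/eqP|]; first by left.
move=> /(IH _ _ _ _ E y) [->|[j [s ->]]]; right; first by exists i, t.+1.
by exists j, s.
Qed.

Lemma run_eq (R : PV k) f t x hist : run A R f.+1 t x hist =
    match A (rcons hist (observe R t x)) with
    | None => Some [:: x]
    | Some c =>
      match [pick i | (cid R i == c) && (pos R i t == x)] with
      | None => None
      | Some i => omap (cons x) (run A R f t.+1 (pos R i t.+1) (rcons hist (observe R t x)))
      end
    end.
Proof. by []. Qed.

Lemma run_S (R : PV k) fuel t x hist w :
  run A R fuel t x hist = Some w -> run A R fuel.+1 t x hist = Some w.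
Proof.
elim: fuel t x hist w => [//|f IH] t x hist w.
rewrite (run_eq _ f) (run_eq _ f.+1).
case: (A _) => [c|//]; case: [pick i | _] => [i|//].
move: (IH t.+1 (pos R i t.+1) (rcons hist (observe R t x))).
case E: (run _ _ _ _ _ _) => [w2|//] /(_ w2 erefl) H2.
by rewrite H2.
Qed.

Lemma run_mono (R : PV k) f f' t x hist w :
  f <= f' -> run A R f t x hist = Some w -> run A R f' t x hist = Some w.
Proof.
move=> /subnKC <-; elim: (f' - f) => [|d IH]; first by rewrite addn0.
by move=> H; rewrite addnS; apply: run_S; apply: IH.
Qed.

Lemma run_det (R : PV k) f1 f2 t x hist w1 w2 :
  run A R f1 t x hist = Some w1 -> run A R f2 t x hist = Some w2 -> w1 = w2.
Proof.
case: (leqP f1 f2) => H E1 E2.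
  by move: (run_mono H E1); rewrite E2 => -[].
by move: (run_mono (ltnW H) E2); rewrite E1 => -[].
Qed.
End Run.

Definition mk k (ss r : seq nat) : PV k := MkPV ss (fun i : 'I_k => val i) (fun _ => r).

Lemma mk_ok k (ss r : seq nat) : uniq ss -> k <= size ss -> 0 < size r ->
  {subset r <= ss} -> {subset ss <= r} ->
  [/\ wf_PV (mk k ss r), homogeneous (mk k ss r) & feasible (mk k ss r)].
Proof.
move=> U S P H1 H2; split.
- split => //. by move=> i j /val_inj.
- by [].
- move=> i; exists (behead r).
  have E : pos (mk k ss r) i 0 :: behead r = r.
    by rewrite /pos /= mod0n; case: r P {H1 H2}.
  rewrite E; split; last by move=> y /H2.
  move=> j Hj; exists i; rewrite /pos /= !modn_small //; exact: ltnW.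
Qed.

Theorem mainTheorem2 (k : nat) (hk : 0 < k) :
  ~ exists A : algorithm,
      forall R : PV k, wf_PV R -> homogeneous R -> feasible R -> solves A R.
Proof.
move=> [A HA].
pose i0 := Ordinal hk.
pose R0 := mk k (iota 0 k) (iota 0 k).
have [w0 h0 f0] : [/\ wf_PV R0, homogeneous R0 & feasible R0].
  by apply: mk_ok => //; rewrite ?iota_uniq ?size_iota.
have st0 : is_start R0 0 by exists i0; rewrite /pos /= mod0n nth_iota.
have [F [w [Ew _]]] := HA R0 w0 h0 f0 0 st0.
pose r1 := mkseq (fun t => t %% k) (F + k) ++ [:: k].
pose R1 := mk k (iota 0 k.+1) r1.
have sz1 : size r1 = (F + k).+1 by rewrite size_cat size_mkseq addn1.
have [w1 h1 f1] : [/\ wf_PV R1, homogeneous R1 & feasible R1].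
  apply: mk_ok; rewrite ?iota_uniq ?size_iota ?sz1 //.
  - move=> y; rewrite mem_cat mem_iota add0n inE leq0n /= => /orP [/mapP [t _ ->]|/eqP ->].
      by apply: ltnW; rewrite ltnS ltn_pmod.
    by rewrite ltnSn.
  - move=> y; rewrite mem_iota add0n leq0n /= ltnS leq_eqVlt => /orP [/eqP ->|Hy].
      by rewrite mem_cat inE eqxx orbT.
    rewrite mem_cat; apply/orP; left; apply/mapP; exists y; last by rewrite modn_small.
    by rewrite mem_iota add0n (leq_trans Hy) // leq_addl.
have E0 : forall i s, s <= 0 + F -> pos R0 i s = pos R1 i s.
  move=> i s; rewrite add0n => Hs; rewrite /pos /= size_iota sz1 nth_iota ?ltn_pmod // add0n.
  have Hs' : s < F + k by rewrite (@leq_trans (F + 1)) ?leq_add2l // addn1 ltnS.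
  rewrite [s %% (F + k).+1]modn_small; last by rewrite ltnS ltnW.
  by rewrite nth_cat size_mkseq Hs' nth_mkseq.
have Ew1 : run A R1 F 0 0 [::] = Some w by rewrite -(@run_agree k A R0 R1 F 0 0 [::]) // => i; exact: E0.
have st1 : is_start R1 0.
  exists i0; rewrite /pos /= mod0n nth_cat size_mkseq ifT ?nth_mkseq ?mod0n //;
  by rewrite addn_gt0 hk orbT.
have [F1 [w' [Ew' Hc]]] := HA R1 w1 h1 f1 0 st1.
have ew := run_det Ew1 Ew'; subst w'.
have : k \in w by apply: Hc; rewrite mem_iota add0n ltnSn.
move=> /(run_elems Ew) [Hk|[i [s Hs]]].
  by move: (hk); rewrite Hk.
by move: Hs; rewrite /pos /= size_iota nth_iota ?ltn_pmod // add0n => Hs;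
   move: (ltn_pmod s hk); rewrite -Hs ltnn.
Qed.
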